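(* Let $A$ be a symmetric real $n\times n$ matrix, $w\in\mathbb{R}^n$ with all entries strictly positive, $W=\mathrm{diag}(w)$, and for nonzero $X\in\{0,1\}^n$ let $e(X)=-\frac{X'AX}{w'X}$ and $\nabla e(X)=w\,\frac{X'AX}{(w'X)^2}-AX\,\frac{2}{w'X}$. Fix a nonzero $X_t\in\{0,1\}^n$ and for $\delta\in\mathbb{R}$ define $$T_t(X,\delta)=\nabla e(X_t)'X+\delta\left(\frac{(\mathbf{1}-2X_t)'WX}{w'X_t}+1\right).$$ Then for every $\delta\ge-\lambda_0(W^{-1/2}AW^{-1/2})$ (where $\lambda_0$ is the smallest eigenvalue), $T_t(X,\delta)\ge e(X)$ for all nonzero $X\in\{0,1\}^n$ and $T_t(X_t,\delta)=e(X_t)$; i.e. $T_t(\cdot,\delta)$ is an auxiliary function for $e$ at $X_t$. In particular, $T_t$ is a pseudo-bound of $e$ at $X_t$.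
   Context: A family $B(X,\delta)$ is a pseudo-bound for $e$ at $X_t$ if for at least one parameter value $\delta'$ the function $B(\cdot,\delta')$ satisfies $B(X,\delta')\ge e(X)$ for all admissible $X$ and $B(X_t,\delta')=e(X_t)$. $\mathbf{1}$ is the all-ones vector. *)

(* Defs.v *)
From mathcomp Require Import all_boot all_order all_algebra.
Set Implicit Arguments. Unset Strict Implicit. Unset Printing Implicit Defensive.
Import Order.TTheory GRing.Theory Num.Theory.
Local Open Scope ring_scope.

Section Defs.
Variables (R : rcfType) (n : nat).

Definition binvec (X : 'cV[R]_n) : Prop := forall i, X i 0 = 0 \/ X i 0 = 1.
Definition admissible (X : 'cV[R]_n) : Prop := binvec X /\ X <> 0.

Definition dotv (u v : 'cV[R]_n) : R := (u^T *m v) 0 0.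
Definition qform (A : 'M[R]_n) (X : 'cV[R]_n) : R := (X^T *m A *m X) 0 0.

Definition Wdiag (w : 'cV[R]_n) : 'M[R]_n := diag_mx w^T.
Definition Wisqrt (w : 'cV[R]_n) : 'M[R]_n := diag_mx (\row_i (Num.sqrt (w i 0))^-1).

Definition e_fun (A : 'M[R]_n) (w X : 'cV[R]_n) : R := - (qform A X / dotv w X).

Definition grad_e (A : 'M[R]_n) (w X : 'cV[R]_n) : 'cV[R]_n :=
  (qform A X / (dotv w X) ^+ 2) *: w - (2 / dotv w X) *: (A *m X).

Definition T_fun (A : 'M[R]_n) (w Xt : 'cV[R]_n) (X : 'cV[R]_n) (delta : R) : R :=
  dotv (grad_e A w Xt) X
  + delta * (((const_mx 1 - 2%:R *: Xt)^T *m Wdiag w *m X) 0 0 / dotv w Xt + 1).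

Definition smallest_eigenvalue (M : 'M[R]_n) (lam0 : R) : Prop :=
  eigenvalue M lam0 /\ forall lam, eigenvalue M lam -> lam0 <= lam.

Definition pseudo_bound (B : 'cV[R]_n -> R -> R) (e : 'cV[R]_n -> R) (Xt : 'cV[R]_n) : Prop :=
  exists delta', (forall X, admissible X -> e X <= B X delta') /\ B Xt delta' = e Xt.

End Defs.

(* Main.v *)
Require Import Defs.
From mathcomp Require Import all_boot all_order all_algebra.
From mathcomp Require Import spectral sesquilinear complex.
From mathcomp Require Import ring lra.
Import Order.TTheory GRing.Theory Num.Theory.
Local Open Scope ring_scope.

Module Spec.
Import Order.TTheory GRing.Theory Num.Theory.
Local Open Scope ring_scope.
Local Open Scope sesquilinear_scope.

Lemma herm_min (C : numClosedFieldType) n (M : 'M[C]_n) (l : C) :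
  M \is hermsymmx ->
  (forall a, a \is Num.real -> eigenvalue M a -> l <= a) ->
  forall u : 'rV[C]_n, l * (u *m u^t*) 0 0 <= (u *m M *m u^t*) 0 0.
Proof.
move=> hM hl u.
have /orthomx_spectralP eM := hermitian_normalmx hM.
set P := spectralmx M in eM; set d := spectral_diag M in eM.
have Pu : P \is unitarymx := spectral_unitarymx M.
have PU : P \in unitmx := spectral_unit M.
rewrite (invmx_unitary Pu) in eM.
have PtP : P^t* *m P = 1%:M by rewrite -(invmx_unitary Pu) mulVmx.
have PPt : P *m P^t* = 1%:M by apply/unitarymxP.
have dr : d \is a realmx := hermitian_spectral_diag_real hM.
have dge : forall j, l <= d 0 j.
  move=> j; apply: hl; first exact: (mxOverP dr).
  apply/eigenvalueP; exists ('e_j *m P).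
    rewrite eM !mulmxA -(mulmxA _ P) PPt mulmx1.
    have -> : ('e_j : 'rV[C]_n) *m diag_mx d = d 0 j *: 'e_j.
      by rewrite mul_mx_diag; apply/matrixP=> a b; rewrite !mxE ord1 eqxx /=; case: eqP => [->|]; rewrite ?mulr0 ?mul0r ?mulr1 ?mul1r.
    by rewrite scalemxAl.
  apply/negP=> /eqP h0.
  move: h0 => /(congr1 (mulmx^~ (invmx P))).
  rewrite mulmxK // mul0mx => /matrixP /(_ 0 j); rewrite !mxE !eqxx /=.
  by move/eqP; rewrite oner_eq0.
set z := u *m P^t*.
have zt : z^t* = P *m u^t*.
  by rewrite /z trmx_mul map_mxM trmxCK.
have e1 : u *m u^t* = z *m z^t*.
  by rewrite zt /z mulmxA -(mulmxA u) PtP mulmx1.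
have e2 : u *m M *m u^t* = z *m diag_mx d *m z^t*.
  by rewrite zt eM /z !mulmxA.
rewrite e1 e2 mul_mx_diag !mxE mulr_sumr; apply: ler_sum => j _.
rewrite !mxE.
move: (\sum_j0 _) => y.
by rewrite [y * d 0 j]mulrC -mulrA; exact: (ler_wpM2r (mul_conjC_ge0 y) (dge j)).
Qed.


Lemma conjRC (R : rcfType) (x : R) : (real_complex R x)^* = real_complex R x.
Proof. by apply: conj_Creal; apply/complex_realP; exists x. Qed.

Lemma real_min (R : rcfType) n (M : 'M[R]_n) (l : R) : M^T = M ->
  (forall a, eigenvalue M a -> l <= a) ->
  forall v : 'cV[R]_n, l * (v^T *m v) 0 0 <= (v^T *m M *m v) 0 0.
Proof.
move=> sM hl v.
pose f := real_complex R.
pose Mc := M ^ f.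
have hM : Mc \is hermsymmx.
  apply/is_hermitianmxP; rewrite expr0 scale1r; apply/matrixP=> i j.
  by rewrite !mxE conjRC -[in LHS]sM mxE.
have := @herm_min _ _ Mc (f l) hM _ (map_mx f v^T).
have ut : (map_mx f v^T)^t* = map_mx f v.
  by apply/matrixP=> i j; rewrite !mxE conjRC.
rewrite ut -!map_mxM !mxE -rmorphM lecR; apply.
move=> a /complex_realP [k ->].
rewrite !eigenvalue_root_char -map_char_poly fmorph_root -eigenvalue_root_char.
by move/hl; rewrite lecR.
Qed.

End Spec.
Import Spec.

Definition bil {R : rcfType} {n} (B : 'M[R]_n) (u v : 'cV[R]_n) : R := (u^T *m B *m v) 0 0.

Lemma W_bound (R : rcfType) n (A : 'M[R]_n) (w : 'cV[R]_n) l : A^T = A ->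
  (forall i, 0 < w i 0) ->
  (forall a, eigenvalue (Wisqrt w *m A *m Wisqrt w) a -> l <= a) ->
  forall v, l * bil (Wdiag w) v v <= bil A v v.
Proof.
move=> sA wp hl v.
pose D := diag_mx (\row_i Num.sqrt (w i 0)).
have sq i : Num.sqrt (w i 0) != 0 by rewrite gt_eqF // sqrtr_gt0.
have SD : Wisqrt w *m D = 1%:M.
  rewrite /Wisqrt /D mulmx_diag -diag_const_mx; congr diag_mx.
  by apply/matrixP=> i j; rewrite !mxE mulVf.
have DS : D *m Wisqrt w = 1%:M.
  rewrite /Wisqrt /D mulmx_diag -diag_const_mx; congr diag_mx.
  by apply/matrixP=> i j; rewrite !mxE mulfV.
have DD : D *m D = Wdiag w.
  rewrite /Wdiag /D mulmx_diag; congr diag_mx.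
  by apply/matrixP=> i j; rewrite !mxE -expr2 sqr_sqrtr ?ord1 // ltW.
have sM : (Wisqrt w *m A *m Wisqrt w)^T = Wisqrt w *m A *m Wisqrt w.
  by rewrite !trmx_mul /Wisqrt tr_diag_mx sA mulmxA.
have := @real_min _ _ _ _ sM hl (D *m v).
rewrite trmx_mul /D tr_diag_mx -/D.
have -> : v^T *m D *m (D *m v) = v^T *m Wdiag w *m v by rewrite -DD !mulmxA.
have -> : v^T *m D *m (Wisqrt w *m A *m Wisqrt w) *m (D *m v) = v^T *m A *m v.
  by rewrite !mulmxA -(mulmxA v^T D) DS mulmx1 -(mulmxA _ (Wisqrt w) D) SD mulmx1.
by [].
Qed.


Section BilLemmas.
Context {R : rcfType} {n : nat}.
Implicit Types (B : 'M[R]_n) (x y z : 'cV[R]_n).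

Lemma bilDl B x y z : bil B (x + y) z = bil B x z + bil B y z.
Proof. by rewrite /bil linearD /= !mulmxDl mxE. Qed.
Lemma bilZl B c x z : bil B (c *: x) z = c * bil B x z.
Proof. by rewrite /bil linearZ /= -!scalemxAl mxE. Qed.
Lemma bilBl B x y z : bil B (x - y) z = bil B x z - bil B y z.
Proof. by rewrite -scaleN1r bilDl bilZl mulN1r. Qed.
Lemma bilDr B x y z : bil B z (x + y) = bil B z x + bil B z y.
Proof. by rewrite /bil mulmxDr mxE. Qed.
Lemma bilZr B c x z : bil B z (c *: x) = c * bil B z x.
Proof. by rewrite /bil -scalemxAr mxE. Qed.
Lemma bilBr B x y z : bil B z (x - y) = bil B z x - bil B z y.
Proof. by rewrite -scaleN1r bilDr bilZr mulN1r. Qed.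
Lemma bil_sym B x y : B^T = B -> bil B x y = bil B y x.
Proof.
move=> sB; rewrite /bil; transitivity ((x^T *m B *m y)^T 0 0); first by rewrite [RHS]mxE.
by rewrite !trmx_mul sB trmxK mulmxA.
Qed.
Lemma bilW (w : 'cV[R]_n) x y : bil (Wdiag w) x y = \sum_i x i 0 * w i 0 * y i 0.
Proof.
rewrite /bil /Wdiag mul_mx_diag mxE; apply: eq_bigr => i _; by rewrite !mxE.
Qed.
Lemma dotvE x y : dotv x y = \sum_i x i 0 * y i 0.
Proof. rewrite /dotv mxE; apply: eq_bigr => i _; by rewrite !mxE. Qed.
Lemma dotv_bil1 x y : dotv x y = bil 1%:M x y.
Proof. by rewrite /dotv /bil mulmx1. Qed.
Lemma bil1A B x y : bil 1%:M (B *m x) y = bil B^T x y.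
Proof. by rewrite /bil mulmx1 trmx_mul. Qed.
Lemma Wsym (w : 'cV[R]_n) : (Wdiag w)^T = Wdiag w.
Proof. exact: tr_diag_mx. Qed.
Lemma bilW_bin (w : 'cV[R]_n) x : binvec x -> bil (Wdiag w) x x = dotv w x.
Proof.
move=> bx; rewrite bilW dotvE; apply: eq_bigr => i _.
by case: (bx i) => ->; rewrite ?mulr0 ?mul0r ?mulr1 ?mul1r.
Qed.
Lemma bilW_one (w : 'cV[R]_n) x : bil (Wdiag w) (const_mx 1) x = dotv w x.
Proof. by rewrite bilW dotvE; apply: eq_bigr => i _; rewrite mxE mul1r. Qed.
Lemma bilW_ge0 (w : 'cV[R]_n) x : (forall i, 0 < w i 0) -> 0 <= bil (Wdiag w) x x.
Proof.
move=> wp; rewrite bilW; apply: sumr_ge0 => i _.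
by rewrite mulrAC; apply: mulr_ge0; [rewrite -expr2; exact: sqr_ge0 | exact: ltW].
Qed.
Lemma dotv_pos (w : 'cV[R]_n) x : (forall i, 0 < w i 0) -> admissible x -> 0 < dotv w x.
Proof.
move=> wp [bx nx].
have [i xi] : exists i, x i 0 = 1.
  case: (boolP [exists i, x i 0 == 1]) => [/existsP [i /eqP]|/existsPn hn]; first by exists i.
  exfalso; apply: nx; apply/matrixP => i j.
  rewrite ord1 !mxE; case: (bx i) => // h; by move: (hn i); rewrite h eqxx.
rewrite dotvE (bigD1 i) //= xi mulr1.
have : 0 <= \sum_(j | j != i) w j 0 * x j 0.
  apply: sumr_ge0 => j _; case: (bx j) => ->; rewrite ?mulr0 ?mulr1 //; exact: ltW.
have := wp i; lra.
Qed.
End BilLemmas.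

Lemma ident (R : rcfType) n (A : 'M[R]_n) (w Xt X : 'cV[R]_n) (delta : R) :
  A^T = A -> binvec Xt -> binvec X -> dotv w X != 0 -> dotv w Xt != 0 ->
  T_fun A w Xt X delta - e_fun A w X =
  dotv w X * (bil A ((dotv w X)^-1 *: X - (dotv w Xt)^-1 *: Xt) ((dotv w X)^-1 *: X - (dotv w Xt)^-1 *: Xt)
     + delta * bil (Wdiag w) ((dotv w X)^-1 *: X - (dotv w Xt)^-1 *: Xt) ((dotv w X)^-1 *: X - (dotv w Xt)^-1 *: Xt)).
Proof.
move=> sA bXt bX na nb.
rewrite /T_fun /e_fun /grad_e /qform.
rewrite -[(X^T *m A *m X) 0 0]/(bil A X X) -[(Xt^T *m A *m Xt) 0 0]/(bil A Xt Xt).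
rewrite -[((const_mx 1 - 2%:R *: Xt)^T *m Wdiag w *m X) 0 0]/(bil (Wdiag w) (const_mx 1 - 2%:R *: Xt) X).
rewrite dotv_bil1 bilBl !bilZl bil1A sA -dotv_bil1.
rewrite bilBl bilZl bilW_one.
rewrite !bilBl !bilBr !bilZl !bilZr (bil_sym A X Xt sA) (bil_sym (Wdiag w) X Xt (Wsym w)).
rewrite !bilW_bin //.
move: na nb; set a := dotv w X; set b := dotv w Xt.
move: (bil A X X) (bil A Xt Xt) (bil A Xt X) (bil (Wdiag w) Xt X) => qX qt c s na nb.
by field; rewrite nb na.
Qed.

Theorem lemma2 (R : rcfType) (n : nat) (A : 'M[R]_n) (w Xt : 'cV[R]_n) (lam0 : R) :
  A^T = A ->
  (forall i, 0 < w i 0) ->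
  admissible Xt ->
  smallest_eigenvalue (Wisqrt w *m A *m Wisqrt w) lam0 ->
  (forall delta : R, - lam0 <= delta ->
     (forall X, admissible X -> e_fun A w X <= T_fun A w Xt X delta) /\
     T_fun A w Xt Xt delta = e_fun A w Xt) /\
  pseudo_bound (T_fun A w Xt) (e_fun A w) Xt.
Proof.
move=> sA wp aXt [_ hmin].
have kW := @W_bound _ _ A w lam0 sA wp hmin.
have bpos := @dotv_pos _ _ w Xt wp aXt.
have main : forall delta : R, - lam0 <= delta ->
     (forall X, admissible X -> e_fun A w X <= T_fun A w Xt X delta) /\
     T_fun A w Xt Xt delta = e_fun A w Xt.
  move=> d hd; split.
    move=> X aX; have apos := @dotv_pos _ _ w X wp aX.
    rewrite -subr_ge0 (@ident _ _ A w Xt X d sA aXt.1 aX.1 (lt0r_neq0 apos) (lt0r_neq0 bpos)).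
    apply: mulr_ge0; first exact: ltW.
    move: (_ - _) => v.
    have h1 := kW v; have h2 := bilW_ge0 w v wp.
    have h3 : 0 <= (d + lam0) * bil (Wdiag w) v v by apply: mulr_ge0 => //; lra.
    rewrite mulrDl in h3; lra.
  apply/eqP; rewrite -subr_eq0 (@ident _ _ A w Xt Xt d sA aXt.1 aXt.1 (lt0r_neq0 bpos) (lt0r_neq0 bpos)).
  by rewrite subrr /bil trmx0 !mul0mx mxE mulr0 addr0 mulr0.
split; first exact: main.
by exists (- lam0); apply: main.
Qed.
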